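(* Let $A,B\in\Gamma(3)$. Then $\Gamma_\infty(3)\cdot A=\Gamma_\infty(3)\cdot B$ if and only if $Inv(A)=Inv(B)$.
   Context: Let $\omega=e^{2\pi i/3}$ and $\mathfrak{o}=\mathbb{Z}[\omega]$. $\Gamma(3)=\{A\in SL_3(\mathfrak{o}) : A\equiv I_3 \pmod{3\mathfrak{o}}\}$ (congruence entrywise), and $\Gamma_\infty(3)$ is the subgroup of upper triangular unipotent matrices in $\Gamma(3)$. For $A=\begin{pmatrix} a&b&c\\ d&e&f\\ g&h&i\end{pmatrix}$, $Inv(A)=(g,\,h,\,i,\,dh-eg,\,di-fg,\,ei-fh)\in\mathfrak{o}^6$, i.e. the bottom row of $A$ followed by the bottom row of the matrix $\Lambda^2(A)=\begin{pmatrix} ae-bd & af-cd & bf-ec\\ ah-bg & ai-cg & bi-hc\\ dh-eg & di-fg & ei-fh\end{pmatrix}$. *)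

(* Defs.v *)
(* The ring o = Z[omega] is realized inside the algebraic
   complex numbers algC. *)
From mathcomp Require Import all_boot all_order all_algebra all_field.
Set Implicit Arguments. Unset Strict Implicit. Unset Printing Implicit Defensive.
Import Order.TTheory GRing.Theory Num.Theory.
Local Open Scope ring_scope.

(* omega = e^{2 pi i/3} = (-1 + i sqrt 3)/2 *)
Definition omega : algC := (-1 + sqrtC (-3)) / 2%:R.

Definition in_o (x : algC) : Prop :=
  exists a b : int, x = a%:~R + b%:~R * omega.

Definition cong3 (x y : algC) : Prop :=
  exists z : algC, in_o z /\ x - y = 3%:R * z.

Definition Gamma3 (A : 'M[algC]_3) : Prop :=
  (forall i j, in_o (A i j)) /\ \det A = 1 /\
  (forall i j, cong3 (A i j) ((1%:M : 'M[algC]_3) i j)).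

Definition GammaInf3 (U : 'M[algC]_3) : Prop :=
  Gamma3 U /\ (forall i j : 'I_3, (j < i)%N -> U i j = 0) /\
  (forall i : 'I_3, U i i = 1).

Definition orbitInf3 (A : 'M[algC]_3) : 'M[algC]_3 -> Prop :=
  fun M => exists U, GammaInf3 U /\ M = U *m A.

Definition r0 : 'I_3 := ord0.
Definition r1 : 'I_3 := inord 1.
Definition r2 : 'I_3 := inord 2.

Definition Inv (A : 'M[algC]_3) : seq algC :=
  [:: A r2 r0; A r2 r1; A r2 r2;
      A r1 r0 * A r2 r1 - A r1 r1 * A r2 r0;
      A r1 r0 * A r2 r2 - A r1 r2 * A r2 r0;
      A r1 r1 * A r2 r2 - A r1 r2 * A r2 r1].

(* Main.v *)
Require Import Defs.
From mathcomp Require Import all_boot all_order all_algebra all_field ring.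
Set Implicit Arguments. Unset Strict Implicit. Unset Printing Implicit Defensive.
Import Order.TTheory GRing.Theory Num.Theory.
Local Open Scope ring_scope.

Lemma ord3P (i : 'I_3) : i = r0 \/ i = r1 \/ i = r2.
Proof.
case: i => [[|[|[|k]]] Hk].
- by left; apply/val_inj.
- by right; left; apply/val_inj; rewrite /= inordK.
- by right; right; apply/val_inj; rewrite /= inordK.
- by [].
Qed.

Lemma v1 : val r1 = 1%N. Proof. by rewrite /= inordK. Qed.
Lemma v2 : val r2 = 2%N. Proof. by rewrite /= inordK. Qed.

Lemma mulmx3 (R : comRingType) (M N : 'M[R]_3) i j :
  (M *m N) i j = M i r0 * N r0 j + M i r1 * N r1 j + M i r2 * N r2 j.
Proof.
rewrite mxE !big_ord_recl big_ord0 addr0 addrA.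
have -> : lift ord0 ord0 = r1 :> 'I_3 by apply/val_inj; rewrite v1.
have -> : lift ord0 (lift ord0 ord0) = r2 :> 'I_3 by apply/val_inj; rewrite v2.
by [].
Qed.

Lemma det3 (R : comRingType) (M : 'M[R]_3) :
  \det M = M r0 r0 * (M r1 r1 * M r2 r2 - M r1 r2 * M r2 r1)
         - M r0 r1 * (M r1 r0 * M r2 r2 - M r1 r2 * M r2 r0)
         + M r0 r2 * (M r1 r0 * M r2 r1 - M r1 r1 * M r2 r0).
Proof.
have -> : r0 = inord 0 by apply/val_inj; rewrite /= inordK.
rewrite [in LHS](_ : M = \matrix_(i < 3, j < 3) M (inord i) (inord j)); last first.
  by apply/matrixP => i j; rewrite mxE !inord_val.
rewrite (expand_det_row _ ord0) !big_ord_recl big_ord0 /cofactor.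
rewrite !(expand_det_row _ ord0) !big_ord_recl !big_ord0 /cofactor.
rewrite !(expand_det_row _ ord0) !big_ord_recl !big_ord0 /cofactor !det_mx00 !mxE /=.
rewrite !(addn0, add0n) /r1 /r2.
have e : (1 + 1 = 2)%N by [].
rewrite ?e.
ring.
Qed.
Lemma omega_eq : omega ^+ 2 + omega + 1 = 0.
Proof.
rewrite /omega; set s := sqrtC _.
have hs : s ^+ 2 = -3 by rewrite sqrtCK.
have h2 : (2%:R : algC) != 0 by rewrite pnatr_eq0.
rewrite (_ : _ + _ = (s ^+ 2 + 3) / 4%:R); last by field.
by rewrite hs addNr mul0r.
Qed.

Lemma in_o_int (k : int) : in_o k%:~R.
Proof. by exists k, 0; rewrite mul0r addr0. Qed.

Lemma in_o0 : in_o 0. Proof. by have := in_o_int 0. Qed.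
Lemma in_o1 : in_o 1. Proof. by have := in_o_int 1. Qed.

Lemma in_o_add x y : in_o x -> in_o y -> in_o (x + y).
Proof.
move=> [a [b ->]] [c [d ->]]; exists (a + c), (b + d).
rewrite !intrD; ring.
Qed.

Lemma in_o_opp x : in_o x -> in_o (- x).
Proof.
move=> [a [b ->]]; exists (- a), (- b).
rewrite !intrN; ring.
Qed.

Lemma in_o_mul x y : in_o x -> in_o y -> in_o (x * y).
Proof.
move=> [a [b ->]] [c [d ->]]; exists (a * c - b * d), (a * d + b * c - b * d).
rewrite !(intrD, intrN, intrM).
have e := omega_eq.
rewrite (_ : (a%:~R + b%:~R * omega) * (c%:~R + d%:~R * omega) = a%:~R * c%:~R - b%:~R * d%:~R +
   (a%:~R * d%:~R + b%:~R * c%:~R - b%:~R * d%:~R) * omega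
   + b%:~R * d%:~R * (omega ^+ 2 + omega + 1)); last by ring.
by rewrite e mulr0 addr0.
Qed.

Definition in3o (x : algC) := exists z, in_o z /\ x = 3%:R * z.

Lemma in3o_add x y : in3o x -> in3o y -> in3o (x + y).
Proof.
move=> [a [ha ->]] [b [hb ->]]; exists (a + b); split; first exact: in_o_add.
by rewrite mulrDr.
Qed.

Lemma in3o_opp x : in3o x -> in3o (- x).
Proof.
move=> [a [ha ->]]; exists (- a); split; first exact: in_o_opp.
by rewrite mulrN.
Qed.

Lemma in3o_mull a x : in_o a -> in3o x -> in3o (a * x).
Proof.
move=> ha [b [hb ->]]; exists (a * b); split; first exact: in_o_mul.
by rewrite mulrCA.
Qed.

Lemma in3o_mulr a x : in_o a -> in3o x -> in3o (x * a).
Proof. by move=> ha hx; rewrite mulrC; apply: in3o_mull. Qed.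

Lemma in3o0 : in3o 0.
Proof. by exists 0; split; [exact: in_o0 | rewrite mulr0]. Qed.

Lemma in_o_sgn (b : bool) : in_o ((-1) ^+ b).
Proof. by case: b; rewrite ?expr1 ?expr0; [apply: in_o_opp; exact: in_o1 | exact: in_o1]. Qed.

Lemma in_o_det n (M : 'M[algC]_n) : (forall i j, in_o (M i j)) -> in_o (\det M).
Proof.
move=> h; rewrite /determinant; apply: big_ind; [exact: in_o0 | exact: in_o_add|].
move=> s _; apply: in_o_mul; first exact: in_o_sgn.
apply: big_ind; [exact: in_o1 | exact: in_o_mul | by move=> i _; apply: h].
Qed.

Lemma in_o_adj n (M : 'M[algC]_n) : (forall i j, in_o (M i j)) ->
  forall i j, in_o (\adj M i j).
Proof.
move=> h i j; rewrite mxE /cofactor -signr_odd; apply: in_o_mul; first exact: in_o_sgn.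
by apply: in_o_det => k l; rewrite !mxE.
Qed.

Lemma in_o_mulmx n (M N : 'M[algC]_n) : (forall i j, in_o (M i j)) ->
  (forall i j, in_o (N i j)) -> forall i j, in_o ((M *m N) i j).
Proof.
move=> hM hN i j; rewrite mxE; apply: big_ind; [exact: in_o0 | exact: in_o_add|].
by move=> k _; apply: in_o_mul.
Qed.

Lemma in3o_mulmx n (M N : 'M[algC]_n) : (forall i j, in3o (M i j)) ->
  (forall i j, in_o (N i j)) -> forall i j, in3o ((M *m N) i j).
Proof.
move=> hM hN i j; rewrite mxE; apply: big_ind; [exact: in3o0 | exact: in3o_add|].
by move=> k _; apply: in3o_mulr.
Qed.

Lemma in_o_id (i j : 'I_3) : in_o ((1%:M : 'M[algC]_3) i j).
Proof. by rewrite mxE; case: (i == j); [exact: in_o1 | exact: in_o0]. Qed.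

Lemma zmod_id (M : zmodType) (x v u o : M) :
  x - o = (x - v - (u - o)) + (v - o) + (u - o).
Proof.
by rewrite addrAC subrK -addrA addKr.
Qed.

Lemma gammainf1 : GammaInf3 1%:M.
Proof.
split; [split; [exact: in_o_id | split; [exact: det1 |]] | split].
- by move=> i j; exists 0; split; [exact: in_o0 | rewrite subrr mulr0].
- by move=> i j h; rewrite mxE (_ : (i == j) = false) //; apply/eqP => e; move: h; rewrite e ltnn.
- by move=> i; rewrite mxE eqxx.
Qed.

Lemma gammainf_mul V U : GammaInf3 V -> GammaInf3 U -> GammaInf3 (V *m U).
Proof.
move=> [[oV [dV cV]] [lV uV]] [[oU [dU cU]] [lU uU]].
split; [split; [exact: in_o_mulmx | split] | split].
- by rewrite det_mulmx dV dU mulr1.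
- move=> i j; rewrite /cong3.
  have e1 : forall (M N : 'M[algC]_3) a b, (M - N) a b = M a b - N a b.
    by move=> M N a b; rewrite !mxE.
  have e2 : forall M N : 'M[algC]_3, (M + N) i j = M i j + N i j.
    by move=> M N; rewrite !mxE.
  have E : V *m U - 1%:M =
     ((V - 1%:M) *m (U - 1%:M)) + (V - 1%:M) + (U - 1%:M).
    by rewrite mulmxBl !mulmxBr mul1mx mulmx1 mulmx1 -zmod_id.
  rewrite -e1 E !e2.
  apply: in3o_add; [apply: in3o_add|].
  + apply: in3o_mulmx => k l; last by rewrite e1; apply: in_o_add;
      [apply: oU | apply: in_o_opp; exact: in_o_id].
    by rewrite e1; apply: cV.
  + by rewrite mxE; apply: cV.
  + by rewrite mxE; apply: cU.
- move=> i j hji; rewrite mxE; apply: big1 => k _.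
  case: (ltnP k i) => h; first by rewrite lV // mul0r.
  by rewrite lU ?mulr0 //; apply: leq_trans hji h.
- move=> i; rewrite mxE (bigD1 i) //= uV uU mulr1 big1 ?addr0 // => k hk.
  case: (ltngtP k i) => h; first by rewrite lV // mul0r.
  + by rewrite lU ?mulr0.
  + by move: hk; rewrite (val_inj h) eqxx.
Qed.

Lemma cof_row (B C : 'M[algC]_3) j k :
  (forall r c, r != j -> C r c = B r c) -> cofactor C j k = cofactor B j k.
Proof.
move=> h; rewrite /cofactor; congr (_ * \det _); apply/matrixP => a b.
by rewrite !mxE h // eq_sym neq_lift.
Qed.

Lemma Uentry (A B : 'M[algC]_3) i j :
  (A *m \adj B) i j = \det (\matrix_(r, c) if r == j then A i c else B r c).
Proof.
rewrite mxE (expand_det_row _ j); apply: eq_bigr => k _.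
rewrite !mxE eqxx (@cof_row B) // => r c /negPf h.
by rewrite mxE h.
Qed.

Lemma e01 : (r0 == r1) = false. Proof. by rewrite -val_eqE /= inordK. Qed.
Lemma e02 : (r0 == r2) = false. Proof. by rewrite -val_eqE /= inordK. Qed.
Lemma e10 : (r1 == r0) = false. Proof. by rewrite -val_eqE /= inordK. Qed.
Lemma e12 : (r1 == r2) = false. Proof. by rewrite -val_eqE /= !inordK. Qed.
Lemma e20 : (r2 == r0) = false. Proof. by rewrite -val_eqE /= inordK. Qed.
Lemma e21 : (r2 == r1) = false. Proof. by rewrite -val_eqE /= !inordK. Qed.

Lemma key (A B : 'M[algC]_3) : Gamma3 A -> Gamma3 B -> Inv A = Inv B ->
  exists U, GammaInf3 U /\ A = U *m B.
Proof.
move=> [oA [dA cA]] [oB [dB cB]] hI.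
exists (A *m \adj B); split; last by rewrite -mulmxA mul_adj_mx dB mulmx1.
have dA' := dA; have dB' := dB; rewrite det3 in dA'; rewrite det3 in dB'.
case: hI => hg hh hi m1 m2 m3.
rewrite -hg -hh -hi in m1 m2 m3 dB'.
have z0 : A r1 r1 * A r2 r2 - A r1 r2 * A r2 r1 - (B r1 r1 * A r2 r2 - B r1 r2 * A r2 r1) = 0.
  by rewrite m3 subrr.
have z1 : A r1 r0 * A r2 r2 - A r1 r2 * A r2 r0 - (B r1 r0 * A r2 r2 - B r1 r2 * A r2 r0) = 0.
  by rewrite m2 subrr.
have z2 : A r1 r0 * A r2 r1 - A r1 r1 * A r2 r0 - (B r1 r0 * A r2 r1 - B r1 r1 * A r2 r0) = 0.
  by rewrite m1 subrr.
have e1 : forall (M N : 'M[algC]_3) a b, (M - N) a b = M a b - N a b.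
  by move=> M N a b; rewrite !mxE.
split; [split; [|split] | split].
- by apply: in_o_mulmx => //; apply: in_o_adj.
- have h := det_mulmx (A *m \adj B) B.
  rewrite -mulmxA mul_adj_mx dB mulmx1 dA in h.
  by rewrite [RHS]h mulr1.
- move=> i j; rewrite /cong3 -e1.
  have -> : A *m \adj B - 1%:M = (A - B) *m \adj B by rewrite mulmxBl mul_mx_adj dB.
  apply: in3o_mulmx; last exact: in_o_adj.
  move=> k l; rewrite e1.
  have -> : A k l - B k l = (A k l - 1%:M k l) - (B k l - 1%:M k l) by ring.
  by apply: in3o_add; [apply: cA | apply: in3o_opp; apply: cB].
- move=> i j hji.
  case: (ord3P i) => [Ei|[Ei|Ei]]; case: (ord3P j) => [Ej|[Ej|Ej]];
    move: hji; rewrite Ei Ej ?v1 ?v2 // => _;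
    rewrite Uentry det3 !mxE ?eqxx ?e01 ?e02 ?e10 ?e12 ?e20 ?e21 -?hg -?hh -?hi.
  + apply/eqP; rewrite -subr_eq0; apply/eqP.
    transitivity ((- A r1 r0) * (A r1 r1 * A r2 r2 - A r1 r2 * A r2 r1 - (B r1 r1 * A r2 r2 - B r1 r2 * A r2 r1))
       + A r1 r1 * (A r1 r0 * A r2 r2 - A r1 r2 * A r2 r0 - (B r1 r0 * A r2 r2 - B r1 r2 * A r2 r0))
       + (- A r1 r2) * (A r1 r0 * A r2 r1 - A r1 r1 * A r2 r0 - (B r1 r0 * A r2 r1 - B r1 r1 * A r2 r0))).
      by ring.
    by rewrite z0 z1 z2 !mulr0 !addr0.
  + by ring.
  + by ring.
- move=> i.
  case: (ord3P i) => Ei; [|case: Ei => Ei]; rewrite Ei;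
    rewrite Uentry det3 !mxE ?eqxx ?e01 ?e02 ?e10 ?e12 ?e20 ?e21 -?hg -?hh -?hi.
  + rewrite -[RHS]dA'; apply/eqP; rewrite -subr_eq0; apply/eqP.
    transitivity ((- A r0 r0) * (A r1 r1 * A r2 r2 - A r1 r2 * A r2 r1 - (B r1 r1 * A r2 r2 - B r1 r2 * A r2 r1))
       + A r0 r1 * (A r1 r0 * A r2 r2 - A r1 r2 * A r2 r0 - (B r1 r0 * A r2 r2 - B r1 r2 * A r2 r0))
       + (- A r0 r2) * (A r1 r0 * A r2 r1 - A r1 r1 * A r2 r0 - (B r1 r0 * A r2 r1 - B r1 r1 * A r2 r0))).
      by ring.
    by rewrite z0 z1 z2 !mulr0 !addr0.
  + rewrite -[RHS]dB'; apply/eqP; rewrite -subr_eq0; apply/eqP.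
    transitivity (B r0 r0 * (A r1 r1 * A r2 r2 - A r1 r2 * A r2 r1 - (B r1 r1 * A r2 r2 - B r1 r2 * A r2 r1))
       - B r0 r1 * (A r1 r0 * A r2 r2 - A r1 r2 * A r2 r0 - (B r1 r0 * A r2 r2 - B r1 r2 * A r2 r0))
       + B r0 r2 * (A r1 r0 * A r2 r1 - A r1 r1 * A r2 r0 - (B r1 r0 * A r2 r1 - B r1 r1 * A r2 r0))).
      by ring.
    by rewrite z0 z1 z2 !mulr0 subrr !addr0.
  + by rewrite -[RHS]dB'; ring.
Qed.

Lemma Inv_mul (U B : 'M[algC]_3) : GammaInf3 U -> Inv (U *m B) = Inv B.
Proof.
move=> [_ [hl hd]].
have u20 : U r2 r0 = 0 by apply: hl; rewrite v2.
have u21 : U r2 r1 = 0 by apply: hl; rewrite v1 v2.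
have u10 : U r1 r0 = 0 by apply: hl; rewrite v1.
rewrite /Inv !mulmx3 u20 u21 u10 !hd.
congr [:: _; _; _; _; _; _]; ring.
Qed.

Theorem theorem2p7 (A B : 'M[algC]_3) :
  Gamma3 A -> Gamma3 B ->
  ((forall M, orbitInf3 A M <-> orbitInf3 B M) <-> Inv A = Inv B).
Proof.
move=> gA gB; split.
- move=> H.
  have : orbitInf3 B A by apply/H; exists 1%:M; split; [exact: gammainf1 | by rewrite mul1mx].
  by case=> U [hU ->]; rewrite Inv_mul.
- move=> hI.
  have [U [hU eA]] := key gA gB hI.
  have [U' [hU' eB]] := key gB gA (esym hI).
  move=> M; split.
  + case=> V [hV ->]; exists (V *m U); split; first exact: gammainf_mul.
    by rewrite eA mulmxA.
  + case=> V [hV ->]; exists (V *m U'); split; first exact: gammainf_mul.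
    by rewrite eB mulmxA.
Qed.
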